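(* Suppose $s_\alpha\in R$ and $w\in W$ satisfy $\ell(s_\alpha w)=\ell(w)+1$. Then (1) $s_\alpha w>w$; and (2) if $s_i$ is a simple reflection with $s_i\neq s_\alpha$ and $s_iw>w$, then $s_is_\alpha w>s_\alpha w$.
   Context: $G$ is a complex reductive linear algebraic group, $B$ is a Borel subgroup, $T\subseteq B$ is a maximal torus, and $W=N(T)/T$ is the Weyl group, with simple reflections $S=\{s_i\}$ and reflections $R=\bigcup_{w\in W}wSw^{-1}$. $s_\alpha$ denotes the reflection associated to the positive root $\alpha$. $\ell(w)$ is the minimal length of a factorization of $w$ into simple reflections. $w\ge v$ in the Bruhat order iff $\overline{BwB/B}\supseteq BvB/B$; equivalently, some (any) reduced word for $w$ contains a subword that is a reduced word for $v$. *)

(* Defs.v *)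
(* Weyl group realized concretely as the group of matrices
   generated by the simple reflections of a (reduced, crystallographic) root
   system with a chosen base. *)
From HB Require Import structures.
From mathcomp Require Import all_boot all_order all_algebra.
From mathcomp Require Export reals.
Set Implicit Arguments.
Unset Strict Implicit.
Unset Printing Implicit Defensive.
Import Order.TTheory GRing.Theory Num.Theory.
Local Open Scope ring_scope.

Section Weyl.
Variables (R : realType) (n : nat).

Definition dotv (u v : 'rV[R]_n) : R := (u *m v^T) 0 0.

(* the orthogonal reflection in the hyperplane orthogonal to a (symmetric
   matrix; acts on row vectors by x *m refl a and on columns by refl a *m y) *)
Definition refl (a : 'rV[R]_n) : 'M[R]_n :=
  1%:M - (2 / dotv a a) *: (a^T *m a).

(* reduced crystallographic root system (not required to span) *)
Definition is_root_system (Phi : seq 'rV[R]_n) : Prop :=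
  [/\ 0 \notin Phi,
      {in Phi &, forall a b, b *m refl a \in Phi},
      {in Phi &, forall a b, exists z : int, 2 * dotv b a / dotv a a = z%:~R}
    & forall a (c : R), a \in Phi -> c *: a \in Phi -> c = 1 \/ c = -1].

Definition is_base (Phi Delta : seq 'rV[R]_n) : Prop :=
  [/\ {subset Delta <= Phi}, uniq Delta,
      (forall c : 'I_(size Delta) -> R,
          \sum_(i < size Delta) c i *: Delta`_i = 0 -> forall i, c i = 0)
    & forall b, b \in Phi -> exists k : 'I_(size Delta) -> int,
          b = \sum_(i < size Delta) (k i)%:~R *: Delta`_i /\
          ((forall i, 0 <= k i) \/ (forall i, k i <= 0))].

Variable Delta : seq 'rV[R]_n.

Definition wprod (ws : seq 'rV[R]_n) : 'M[R]_n :=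
  foldr (fun a M => refl a *m M) 1%:M ws.

Definition is_word (ws : seq 'rV[R]_n) (w : 'M[R]_n) : Prop :=
  {subset ws <= Delta} /\ wprod ws = w.

(* w lies in W and l(w) = k *)
Definition has_length (w : 'M[R]_n) (k : nat) : Prop :=
  (exists ws, is_word ws w /\ size ws = k) /\
  (forall ws, is_word ws w -> (k <= size ws)%N).

Definition reduced_word (ws : seq 'rV[R]_n) (w : 'M[R]_n) : Prop :=
  is_word ws w /\ forall ws', is_word ws' w -> (size ws <= size ws')%N.

(* Bruhat order via subwords: v <= w iff some reduced word of w contains
   a subword that is a reduced word for v *)
Definition bruhat_le (v w : 'M[R]_n) : Prop :=
  exists ws, reduced_word ws w /\
    exists us, subseq us ws /\ reduced_word us v.

Definition bruhat_lt (v w : 'M[R]_n) : Prop := bruhat_le v w /\ v <> w.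

End Weyl.

(* Main.v *)
Require Import Defs.
From mathcomp Require Import all_boot all_order all_algebra.
From mathcomp Require Import reals zify.
Import Order.TTheory GRing.Theory Num.Theory.
Local Open Scope ring_scope.
Set Implicit Arguments.
Unset Strict Implicit.

Section Alg.
Variables (R : realType) (n : nat).
Implicit Types (a b x s g : 'rV[R]_n).

Lemma mulT_mx x s : x *m s^T *m s = dotv x s *: s.
Proof. by rewrite [x *m s^T]mx11_scalar mul_scalar_mx. Qed.

Lemma outer_sq a : a^T *m a *m (a^T *m a) = dotv a a *: (a^T *m a).
Proof.
by rewrite -mulmxA (mulmxA a) [a *m a^T]mx11_scalar mul_scalar_mx scalemxAr.
Qed.

Lemma dotv_eq0 a : dotv a a = 0 -> a = 0.
Proof.
rewrite /dotv mxE => H; apply/rowP => j; rewrite mxE.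
have P : forall i, predT i -> 0 <= a 0 i * a^T i 0.
  by move=> i _; rewrite mxE -expr2 sqr_ge0.
have := @psumr_eq0P R _ predT (fun k => a 0 k * a^T k 0) P H j isT.
rewrite mxE => E; apply/eqP; rewrite -[_ == 0]orbb -mulf_eq0; apply/eqP; exact: E.
Qed.

Lemma refl_tr a : (refl a)^T = refl a.
Proof. by rewrite /refl linearB /= trmx1 linearZ /= trmx_mul trmxK. Qed.

Lemma mul_refl x a : a != 0 -> x *m refl a = x - (2 * dotv x a / dotv a a) *: a.
Proof.
move=> _; rewrite /refl mulmxBr mulmx1 -scalemxAr mulmxA mulT_mx scalerA.
by rewrite mulrAC.
Qed.

Lemma dotv_neq0 a : a != 0 -> dotv a a != 0.
Proof. by move=> /eqP H; apply/eqP => /dotv_eq0. Qed.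

Lemma refl_self a : a != 0 -> a *m refl a = - a.
Proof.
move=> Ha; rewrite mul_refl // -mulrA divff ?dotv_neq0 // mulr1 scaler_nat.
by rewrite mulr2n opprD addrA subrr add0r.
Qed.

Lemma reflK a : a != 0 -> refl a *m refl a = 1%:M.
Proof.
move=> Ha; have d0 := dotv_neq0 Ha.
rewrite {1}/refl mulmxBl mul1mx -scalemxAl /refl mulmxBr mulmx1 -scalemxAr outer_sq.
by rewrite scalerA divfK // scaler_nat mulr2n opprD addrA subrr add0r scalerN opprK subrK.
Qed.

Lemma reflN a : refl (- a) = refl a.
Proof.
by rewrite /refl /dotv linearN /= mulNmx mulmxN mulNmx mulmxN opprK !mxE opprK.
Qed.

Lemma dotv_refl g s : s != 0 -> dotv (g *m refl s) (g *m refl s) = dotv g g.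
Proof.
move=> Hs; rewrite /dotv trmx_mul refl_tr -(mulmxA g) (mulmxA (refl s)) reflK //.
by rewrite mul1mx.
Qed.

Lemma conj_gen (M : 'M[R]_n) g : M^T = M -> M *m M = 1%:M ->
  M *m refl g *m M = refl (g *m M).
Proof.
move=> T K.
have D : dotv (g *m M) (g *m M) = dotv g g.
  by rewrite /dotv trmx_mul T -(mulmxA g) (mulmxA M) K mul1mx.
rewrite /refl D trmx_mul T.
rewrite mulmxBr mulmx1 mulmxBl K -!scalemxAr -scalemxAl !mulmxA.
done.
Qed.

Lemma refl_conj g s : s != 0 -> refl s *m refl g *m refl s = refl (g *m refl s).
Proof. by move=> Hs; apply: conj_gen; [exact: refl_tr | exact: reflK]. Qed.
End Alg.
Section Roots.
Variables (R : realType) (n : nat) (Phi Delta : seq 'rV[R]_n).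
Hypothesis hPhi : is_root_system Phi.
Hypothesis hDelta : is_base Phi Delta.
Implicit Types (a b x s g : 'rV[R]_n).

Local Notation N := (size Delta).

Definition pos g := exists k : 'I_N -> int,
  g = \sum_(i < N) (k i)%:~R *: Delta`_i /\ forall i, 0 <= k i.
Definition neg g := exists k : 'I_N -> int,
  g = \sum_(i < N) (k i)%:~R *: Delta`_i /\ forall i, k i <= 0.

Lemma root_ne0 g : g \in Phi -> g != 0.
Proof. by case: hPhi => H0 _ _ _ Hg; apply: contraNneq H0 => <-. Qed.

Lemma Phi_refl a g : a \in Phi -> g \in Phi -> g *m refl a \in Phi.
Proof. by case: hPhi => _ H _ _ Ha Hg; apply: H. Qed.

Lemma Delta_Phi s : s \in Delta -> s \in Phi.
Proof. by case: hDelta => H _ _ _; apply: H. Qed.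

Lemma Phi_N g : g \in Phi -> - g \in Phi.
Proof. by move=> Hg; rewrite -refl_self ?root_ne0 //; apply: Phi_refl. Qed.

Lemma pos_or_neg g : g \in Phi -> pos g \/ neg g.
Proof.
case: hDelta => _ _ _ H /H [k [-> [Hk|Hk]]]; [left|right]; by exists k.
Qed.

Lemma coef_uniq (c d : 'I_N -> R) :
  \sum_(i < N) c i *: Delta`_i = \sum_(i < N) d i *: Delta`_i -> forall i, c i = d i.
Proof.
case: hDelta => _ _ Hind _ E i; apply/eqP; rewrite -subr_eq0; apply/eqP.
apply: (Hind (fun i => c i - d i)) => //.
under eq_bigr do rewrite scalerBl.
by rewrite sumrB E subrr.
Qed.

Lemma pos_neg0 g : pos g -> neg g -> g = 0.
Proof.
move=> [k [Ek Hk]] [k' [Ek' Hk']].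
have E := coef_uniq (etrans (esym Ek) Ek').
rewrite Ek big1 // => i _.
have : k i = k' i by apply/eqP; rewrite -(eqr_int R); apply/eqP; apply: E.
move=> e; have : k i = 0 by apply/eqP; rewrite eq_le Hk andbT e Hk'.
by move->; rewrite scale0r.
Qed.

Lemma posN g : pos g -> neg (- g).
Proof.
move=> [k [-> Hk]]; exists (fun i => - k i); split.
  by rewrite -sumrN; apply: eq_bigr => i _; rewrite intrN scaleNr.
by move=> i; rewrite oppr_le0.
Qed.

Lemma negN g : neg g -> pos (- g).
Proof.
move=> [k [-> Hk]]; exists (fun i => - k i); split.
  by rewrite -sumrN; apply: eq_bigr => i _; rewrite intrN scaleNr.
by move=> i; rewrite oppr_ge0.
Qed.

Lemma neg_pos_root g : g \in Phi -> ~ pos g -> neg g.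
Proof. by move=> /pos_or_neg []. Qed.

Lemma pos_not_neg g : g \in Phi -> pos g -> ~ neg g.
Proof. by move=> Hg Hp Hn; move: (root_ne0 Hg); rewrite (pos_neg0 Hp Hn) eqxx. Qed.

Lemma sum_delta (j : 'I_N) (c : R) :
  \sum_(i < N) ((i == j)%:R * c) *: Delta`_i = c *: Delta`_j.
Proof.
rewrite (bigD1 j) //= eqxx mul1r big1 ?addr0 // => i /negbTE ->.
by rewrite mul0r scale0r.
Qed.

Lemma pos_Delta s : s \in Delta -> pos s.
Proof.
move=> Hs; pose j : 'I_N := Ordinal (etrans (index_mem s Delta) Hs).
have Ej : Delta`_j = s by rewrite /= nth_index.
exists (fun i => (i == j)%:R); split.
  rewrite -{1}Ej -[Delta`_j]scale1r -sum_delta; apply: eq_bigr => i _.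
  by rewrite mulr1; case: (i == j).
by move=> i; case: (i == j).
Qed.

Lemma key s g : s \in Delta -> g \in Phi -> pos g -> g != s -> pos (g *m refl s).
Proof.
move=> Hs Hg [k [Ek Hk]] Hne.
have s0 : s != 0 by apply: root_ne0; apply: Delta_Phi.
pose j : 'I_N := Ordinal (etrans (index_mem s Delta) Hs).
have Ej : Delta`_j = s by rewrite /= nth_index.
have Hg' : g *m refl s \in Phi by apply: Phi_refl => //; apply: Delta_Phi.
case: (pickP (fun i => (i != j) && (0 < k i))) => [i /andP [Hij Hki] | H].
  case: (pos_or_neg Hg') => // [[k' [Ek' Hk']]].
  exfalso.
  set c := 2 * dotv g s / dotv s s.
  have E : \sum_(l < N) ((k l)%:~R - (l == j)%:R * c) *: Delta`_l =
           \sum_(l < N) (k' l)%:~R *: Delta`_l.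
    under eq_bigr do rewrite scalerBl.
    rewrite sumrB sum_delta Ej -Ek -Ek' mul_refl //.
  have := coef_uniq E i; rewrite (negbTE Hij) mul0r subr0 => /eqP.
  rewrite eqr_int => /eqP e.
  by move: (Hk' i); rewrite -e leNgt Hki.
have E : g = (k j)%:~R *: s.
  rewrite Ek (bigD1 j) //= Ej big1 ?addr0 // => i Hij.
  have : k i = 0.
    by apply/eqP; rewrite eq_le Hk andbT leNgt; move: (H i); rewrite Hij /= => ->.
  by move->; rewrite scale0r.
case: hPhi => _ _ _ Hred.
have : (k j)%:~R *: s \in Phi by rewrite -E.
move/(Hred s _ (Delta_Phi Hs)) => [e|e].
  by move: Hne; rewrite E e scale1r eqxx.
have : (0:R) <= (k j)%:~R by rewrite ler0z.
by rewrite e lerNr oppr0 ler10.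
Qed.

Lemma Phi_wprod g ws : g \in Phi -> {subset ws <= Delta} -> g *m wprod ws \in Phi.
Proof.
elim: ws g => [|s ws IH] g Hg Hws /=; first by rewrite mulmx1.
rewrite mulmxA; apply: IH; last by move=> x Hx; apply: Hws; rewrite inE Hx orbT.
by apply: Phi_refl => //; apply: Delta_Phi; apply: Hws; rewrite inE eqxx.
Qed.

End Roots.
Section Words.
Variables (R : realType) (n : nat) (Phi Delta : seq 'rV[R]_n).
Hypothesis hPhi : is_root_system Phi.
Hypothesis hDelta : is_base Phi Delta.
Implicit Types (a b x s g : 'rV[R]_n).

Local Notation pos := (pos Delta).
Local Notation neg := (neg Delta).

Lemma Dne0 s : s \in Delta -> s != 0.
Proof. by move=> Hs; apply: (root_ne0 hPhi); apply: (Delta_Phi hDelta). Qed.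

Lemma reflKl a (M : 'M[R]_n) : a != 0 -> refl a *m (refl a *m M) = M.
Proof. by move=> Ha; rewrite mulmxA reflK // mul1mx. Qed.

Lemma del ws b : {subset ws <= Delta} -> b \in Phi -> pos b ->
  neg (b *m wprod ws) ->
  exists ws' : seq 'rV[R]_n, [/\ subseq ws' ws, (size ws').+1 = size ws &
                  refl b *m wprod ws = wprod ws'].
Proof.
elim: ws b => [|s ws IH] b Hws Hb Hp Hn /=.
  by exfalso; move: Hn; rewrite mulmx1; apply: (pos_not_neg hPhi hDelta).
have Hs : s \in Delta by apply: Hws; rewrite inE eqxx.
have Hws' : {subset ws <= Delta} by move=> x Hx; apply: Hws; rewrite inE Hx orbT.
case: (eqVneq b s) => [->|Hne].
  by exists ws; split => //; [exact: subseq_cons | rewrite reflKl // Dne0].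
have Hb' : b *m refl s \in Phi by apply: (Phi_refl hPhi) => //; apply: (Delta_Phi hDelta).
have Hp' := key hPhi hDelta Hs Hb Hp Hne.
have [|ws' [Hsub Hsz E]] := IH _ Hws' Hb' Hp'; first by rewrite -mulmxA.
exists (s :: ws'); split => //=; first by rewrite eqxx.
  by rewrite Hsz.
by rewrite -E -refl_conj ?Dne0 // !mulmxA reflK ?Dne0 // mul1mx.
Qed.

Lemma del_cons s ws b : {subset s :: ws <= Delta} -> b \in Phi -> pos b -> b != s ->
  neg (b *m wprod (s :: ws)) ->
  exists ws' : seq 'rV[R]_n, [/\ subseq ws' ws, (size ws').+1 = size ws &
                  refl b *m wprod (s :: ws) = refl s *m wprod ws'].
Proof.
move=> Hws Hb Hp Hne Hn /=.
have Hs : s \in Delta by apply: Hws; rewrite inE eqxx.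
have Hws' : {subset ws <= Delta} by move=> x Hx; apply: Hws; rewrite inE Hx orbT.
have Hb' : b *m refl s \in Phi by apply: (Phi_refl hPhi) => //; apply: (Delta_Phi hDelta).
have Hp' := key hPhi hDelta Hs Hb Hp Hne.
have [|ws' [Hsub Hsz E]] := del Hws' Hb' Hp'; first by rewrite -mulmxA.
exists ws'; split => //.
by rewrite -E -refl_conj ?Dne0 // !mulmxA reflK ?Dne0 // mul1mx.
Qed.

Lemma has_length_uniq w k k' : has_length Delta w k -> has_length Delta w k' -> k = k'.
Proof.
move=> [[ws [Hw Hs]] Hm] [[ws' [Hw' Hs']] Hm'].
have := Hm ws' Hw'; have := Hm' ws Hw; lia.
Qed.

Lemma subseq_Delta ws ws' : subseq ws' ws -> {subset ws <= Delta} -> {subset ws' <= Delta}.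
Proof. by move=> /mem_subseq H1 H2 x /H1 /H2. Qed.

Lemma negside b v m : b \in Phi -> pos b -> has_length Delta v m ->
  has_length Delta (refl b *m v) m.+1 -> neg (b *m (refl b *m v)).
Proof.
move=> Hb Hp [[ws [[Hws Ew] Hsz]] Hm] [_ Hm'].
have Hin : b *m (refl b *m v) \in Phi.
  rewrite -Ew mulmxA. apply: (Phi_wprod hPhi hDelta) => //. exact: (Phi_refl hPhi Hb Hb).
case: (pos_or_neg hDelta Hin) => // Hp2; exfalso.
have Hn : neg (b *m wprod ws).
  rewrite Ew -[v](reflKl _ (root_ne0 hPhi Hb)) [b *m (refl b *m _)]mulmxA refl_self ?(root_ne0 hPhi) //.
  by rewrite mulNmx; apply: posN.
have [ws' [Hsub Hsz' E]] := del Hws Hb Hp Hn.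
have H1 : is_word Delta ws' (refl b *m v).
  by split; [exact: (subseq_Delta Hsub Hws) | rewrite -E Ew].
have := Hm' ws' H1; move: Hsz'; rewrite Hsz => <- H; move: (ltnW H); by rewrite ltnn.
Qed.

Lemma pick_pos c : c \in Phi -> exists b, [/\ b \in Phi, pos b & refl b = refl c].
Proof.
move=> Hc; case: (pos_or_neg hDelta Hc) => H.
  by exists c.
exists (- c); split; [exact: Phi_N | exact: negN | exact: reflN].
Qed.

Lemma gen_lt c v m : c \in Phi -> has_length Delta v m ->
  has_length Delta (refl c *m v) m.+1 -> bruhat_lt Delta v (refl c *m v).
Proof.
move=> Hc Hv Hcv.
have [b [Hb Hp Eb]] := pick_pos Hc.
rewrite -Eb in Hcv *.
have Hn := negside Hb Hp Hv Hcv.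
have [[ws [[Hws Ew] Hsz]] Hm] := Hcv.
have [ws' [Hsub Hsz' E]] := del Hws Hb Hp (eq_ind_r (fun M => neg (b *m M)) Hn Ew).
split; last first.
  by move=> Evv; have := has_length_uniq Hv (eq_ind_r (fun M => has_length Delta M m.+1) Hcv Evv); lia.
exists ws; split.
  split; first by split.
  by move=> ws'' /Hm; rewrite Hsz.
exists ws'; split => //; split.
  split; first exact: subseq_Delta Hsub Hws.
  by rewrite -E Ew reflKl // (root_ne0 hPhi).
by move=> ws'' /(proj2 Hv); rewrite -Hsz' in Hsz; move: Hsz => /eqP; rewrite eqSS => /eqP ->.
Qed.

End Words.

Theorem mainTheorem12 (R : realType) (n : nat) (Phi Delta : seq 'rV[R]_n)
    (hPhi : is_root_system Phi) (hDelta : is_base Phi Delta)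
    (a : 'rV[R]_n) (ha : a \in Phi) (w : 'M[R]_n) (k : nat)
    (hw : has_length Delta w k)
    (hsw : has_length Delta (refl a *m w) k.+1) :
  bruhat_lt Delta w (refl a *m w) /\
  (forall b, b \in Delta -> refl b <> refl a ->
     bruhat_lt Delta w (refl b *m w) ->
     bruhat_lt Delta (refl a *m w) (refl b *m (refl a *m w))).
Proof.
split; first exact: (gen_lt hPhi hDelta ha hw hsw).
move=> b Hb Hne Hlt.
have [beta [Hbeta Hpb Eb]] := pick_pos hPhi hDelta ha.
have hsw' := hsw; rewrite -Eb in hsw'.
have Hn := negside hPhi hDelta Hbeta Hpb hw hsw'.
rewrite Eb in Hn.
set u := refl a *m w in hsw Hn *.
have HbPhi := Delta_Phi hDelta Hb.
have b0 : b != 0 := Dne0 hPhi hDelta Hb.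
have Hbne : beta != b by apply/eqP => E; apply: Hne; rewrite -Eb E.
have [[us [[Hus Eu] Hsz]] Hm] := hsw.
have Hpos : pos Delta (b *m u).
  have Hin : b *m u \in Phi by rewrite -Eu; apply: (Phi_wprod hPhi hDelta).
  case: (pos_or_neg hDelta Hin) => // Hnb; exfalso.
  have [vs [Hsub Hsz' E]] := del hPhi hDelta Hus HbPhi (pos_Delta Hb) (eq_ind_r (fun M => neg Delta (b *m M)) Hnb Eu).
  have Hvs : {subset b :: vs <= Delta}.
    by move=> x; rewrite inE => /orP [/eqP ->|]; [| apply: (subseq_Delta Hsub Hus)].
  have Eu2 : wprod (b :: vs) = u by rewrite /= -E Eu reflKl.
  have [rest [Hsub2 Hsz2 E2]] := del_cons hPhi hDelta Hvs Hbeta Hpb Hbne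
     (eq_ind_r (fun M => neg Delta (beta *m M)) Hn Eu2).
  rewrite Eu2 /u -Eb reflKl ?(root_ne0 hPhi) // in E2.
  have Ew : refl b *m w = wprod rest by rewrite E2 reflKl.
  move: Hlt => [[ws [[Hws Hmin] [us' [Hsub' [Hus' _]]]]] _].
  have H1 := Hmin rest (conj (subseq_Delta Hsub2 (subseq_Delta Hsub Hus)) (esym Ew)).
  have H2 := proj2 hw us' Hus'.
  have H3 := leq_trans (leq_trans H2 (size_subseq Hsub')) H1.
  have e1 : size vs = k by apply/eqP; rewrite -eqSS Hsz' Hsz.
  by move: H3; rewrite -e1 -Hsz2 ltnn.
have H2 : has_length Delta (refl b *m u) k.+2.
  split.
    exists (b :: us); split; last by rewrite /= Hsz.
    split; last by rewrite /= Eu.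
    by move=> x; rewrite inE => /orP [/eqP ->|/Hus].
  move=> ws2 [Hws2 E2].
  have Hn2 : neg Delta (b *m wprod ws2).
    by rewrite E2 mulmxA refl_self // mulNmx; apply: posN.
  have [ws3 [Hsub3 Hsz3 E3]] := del hPhi hDelta Hws2 HbPhi (pos_Delta Hb) Hn2.
  rewrite E2 reflKl // in E3.
  have := Hm ws3 (conj (subseq_Delta Hsub3 Hws2) (esym E3)).
  by rewrite -Hsz3 ltnS.
exact: (gen_lt hPhi hDelta HbPhi hsw H2).
Qed.
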